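(* Let $N$ be a closed flat surface and consider two disjoint embedded open metric disks in $N$, both of diameter $h$, with centers at distance $d$. If this configuration realizes the maximum of $h\sqrt{4h^2+d^2}/\mathsf{vol}(N)$ over all closed flat surfaces and all configurations of two disjoint embedded open disks of equal diameter, then $d=h$.
   Context: A closed flat surface is a flat torus or flat Klein bottle; $\mathsf{vol}$ is area; distances are measured in the flat metric. *)

(* Defs.v *)
From Stdlib Require Import Reals Lra ZArith.
Open Scope R_scope.

Definition pt := (R * R)%type.
Definition edist (p q : pt) : R :=
  sqrt ((fst p - fst q) ^ 2 + (snd p - snd q) ^ 2).

(** Closed flat surfaces, up to isometry (classification):
    - a flat torus R^2 / (Z u + Z v), u = (u1,u2), v = (v1,v2) linearly independent;
    - a flat Klein bottle R^2 / G where G is generated by the glide reflection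
      (x,y) |-> (x + a, -y) and the translation (x,y) |-> (x, y + b), a, b > 0. *)
Inductive flat_surface : Type :=
  | FlatTorus (u1 u2 v1 v2 : R)
  | FlatKlein (a b : R).

Definition valid_surface (N : flat_surface) : Prop :=
  match N with
  | FlatTorus u1 u2 v1 v2 => u1 * v2 - u2 * v1 <> 0
  | FlatKlein a b => 0 < a /\ 0 < b
  end.

Definition area (N : flat_surface) : R :=
  match N with
  | FlatTorus u1 u2 v1 v2 => Rabs (u1 * v2 - u2 * v1)
  | FlatKlein a b => a * b
  end.

Definition deck (N : flat_surface) (m n : Z) (p : pt) : pt :=
  match N with
  | FlatTorus u1 u2 v1 v2 =>
      (fst p + IZR m * u1 + IZR n * v1, snd p + IZR m * u2 + IZR n * v2)
  | FlatKlein a b =>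
      (fst p + IZR m * a,
       (if Z.even m then snd p else - snd p) + IZR n * b)
  end.

Definition same_point (N : flat_surface) (p q : pt) : Prop :=
  exists m n : Z, deck N m n p = q.

Definition is_flat_dist (N : flat_surface) (p q : pt) (d : R) : Prop :=
  (exists m n : Z, edist p (deck N m n q) = d) /\
  (forall m n : Z, d <= edist p (deck N m n q)).

Definition embedded_disk (N : flat_surface) (p : pt) (r : R) : Prop :=
  forall x y : pt, edist p x < r -> edist p y < r -> same_point N x y -> x = y.

Definition disjoint_disks (N : flat_surface) (p1 p2 : pt) (r : R) : Prop :=
  forall x y : pt, edist p1 x < r -> edist p2 y < r -> ~ same_point N x y.

Definition two_disk_config (N : flat_surface) (h : R) (p1 p2 : pt) : Prop :=
  valid_surface N /\ 0 < h /\
  embedded_disk N p1 (h / 2) /\ embedded_disk N p2 (h / 2) /\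
  disjoint_disks N p1 p2 (h / 2).

Definition objective (N : flat_surface) (h d : R) : R :=
  h * sqrt (4 * h ^ 2 + d ^ 2) / area N.

(* Main.v *)
Require Import Defs.
From Stdlib Require Import Reals Lra Lia Psatz ZArith List.
Open Scope R_scope.

Definition sq2 (p q : pt) : R := (fst p - fst q) ^ 2 + (snd p - snd q) ^ 2.

Lemma sq2_nonneg p q : 0 <= sq2 p q.
Proof. unfold sq2. pose proof (pow2_ge_0 (fst p - fst q)). pose proof (pow2_ge_0 (snd p - snd q)). lra. Qed.

Lemma edist_sq p q : edist p q ^ 2 = sq2 p q.
Proof. unfold edist. fold (sq2 p q). rewrite pow2_sqrt; [reflexivity| apply sq2_nonneg]. Qed.

Lemma edist_nonneg p q : 0 <= edist p q.
Proof. unfold edist. apply sqrt_pos. Qed.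

Lemma le_edist_sq r p q : 0 <= r -> r <= edist p q -> r ^ 2 <= sq2 p q.
Proof. intros H1 H2. rewrite <- edist_sq. pose proof (edist_nonneg p q). nra. Qed.

Lemma lt_edist r p q : 0 < r -> sq2 p q < r ^ 2 -> edist p q < r.
Proof. intros H1 H2. pose proof (edist_nonneg p q). pose proof (edist_sq p q).
  destruct (Rlt_or_le (edist p q) r); auto. nra. Qed.

Lemma disj_lower N p1 p2 h : 0 < h -> disjoint_disks N p1 p2 (h/2) ->
  forall m n, h ^ 2 <= sq2 p1 (deck N m n p2).
Proof.
  intros Hh Hd m n. destruct (Rlt_or_le (sq2 p1 (deck N m n p2)) (h^2)) as [Hlt|]; [|assumption].
  exfalso. destruct p1 as [x1 y1]. destruct p2 as [x2 y2].
  set (q := deck N m n (x2,y2)) in *.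
  set (M := ((x1 + fst q)/2, (y1 + snd q)/2)).
  assert (HM : edist (x1,y1) M < h/2).
  { apply lt_edist; [lra|]. unfold sq2 in *; unfold M; simpl in *. nra. }
  destruct N as [u1 u2 v1 v2 | a b].
  - set (y := (fst M - IZR m * u1 - IZR n * v1, snd M - IZR m * u2 - IZR n * v2)).
    apply (Hd M y HM).
    + apply lt_edist; [lra|]. unfold sq2 in *; unfold y, M, q in *; simpl in *. nra.
    + exists (-m)%Z, (-n)%Z. unfold y; simpl. rewrite !opp_IZR. f_equal; ring.
  - set (s := if Z.even m then 1 else -1).
    assert (Hs : s * s = 1) by (unfold s; destruct (Z.even m); ring).
    assert (Hq : q = (x2 + IZR m * a, s * y2 + IZR n * b)).
    { unfold q, s; simpl. destruct (Z.even m); f_equal; ring. }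
    set (y := (fst M - IZR m * a, s * (snd M - IZR n * b))).
    apply (Hd M y HM).
    + apply lt_edist; [lra|]. rewrite Hq in *. unfold sq2 in *; unfold y, M in *; simpl in *.
      unfold s in *; destruct (Z.even m); nra.
    + exists (-m)%Z, (if Z.even m then (-n)%Z else n). unfold y; simpl.
      rewrite Z.even_opp. unfold s. destruct (Z.even m); simpl; rewrite ?opp_IZR; f_equal; ring.
Qed.

Lemma emb_trans N p r m n t1 t2 : 0 < r -> embedded_disk N p r ->
  (forall x, deck N m n x = (fst x + t1, snd x + t2)) -> 0 < t1 ^ 2 + t2 ^ 2 ->
  4 * r ^ 2 <= t1 ^ 2 + t2 ^ 2.
Proof.
  intros Hr He Hd Hpos. destruct (Rlt_or_le (t1^2+t2^2) (4*r^2)) as [Hlt|]; [|assumption].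
  exfalso. destruct p as [px py].
  set (x := (px - t1/2, py - t2/2)). set (y := (px + t1/2, py + t2/2)).
  assert (Hxy : x = y).
  { apply (He x y).
    - apply lt_edist; auto. unfold sq2, x; simpl. nra.
    - apply lt_edist; auto. unfold sq2, y; simpl. nra.
    - exists m, n. rewrite Hd. unfold x, y; simpl. f_equal; field. }
  unfold x, y in Hxy. injection Hxy as H1 H2. nra.
Qed.

Lemma emb_glide a b p r n : 0 < a -> 0 < r -> embedded_disk (FlatKlein a b) p r ->
  4 * r ^ 2 <= a ^ 2 + (2 * snd p - IZR n * b) ^ 2.
Proof.
  intros Ha Hr He. destruct (Rlt_or_le (a ^ 2 + (2 * snd p - IZR n * b) ^ 2) (4*r^2)) as [Hlt|]; [|assumption].
  exfalso. destruct p as [px py]. simpl in *.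
  set (x := (px - a/2, IZR n * b / 2)). set (y := (px + a/2, IZR n * b / 2)).
  assert (Hxy : x = y).
  { apply (He x y).
    - apply lt_edist; auto. unfold sq2, x; simpl. nra.
    - apply lt_edist; auto. unfold sq2, y; simpl. nra.
    - exists 1%Z, n. unfold x, y; simpl. f_equal; field. }
  unfold x, y in Hxy. injection Hxy as H1. lra.
Qed.

Lemma round_Z (x : R) : exists k : Z, - (1/2) <= x - IZR k <= 1/2.
Proof.
  destruct (archimed (x + 1/2)) as [H1 H2].
  exists (up (x + 1/2) - 1)%Z. rewrite minus_IZR. lra.
Qed.

Lemma floor_Z (x : R) : exists k : Z, IZR k <= x < IZR k + 1.
Proof.
  destruct (archimed x) as [H1 H2].
  exists (up x - 1)%Z. rewrite minus_IZR. lra.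
Qed.

Lemma flat_dist_sq N p1 p2 d : is_flat_dist N p1 p2 d ->
  0 <= d /\ forall m n, d ^ 2 <= sq2 p1 (deck N m n p2).
Proof.
  intros [[m0 [n0 H0]] H]. assert (0 <= d) by (rewrite <- H0; apply edist_nonneg).
  split; auto. intros m n. apply le_edist_sq; auto.
Qed.

Lemma flat_dist_ge N p1 p2 h d : two_disk_config N h p1 p2 -> is_flat_dist N p1 p2 d -> h <= d.
Proof.
  intros (Hv & Hh & He1 & He2 & Hd) [[m0 [n0 H0]] H].
  pose proof (disj_lower N p1 p2 h Hh Hd m0 n0) as L.
  rewrite <- H0. unfold edist. fold (sq2 p1 (deck N m0 n0 p2)).
  rewrite <- (sqrt_pow2 h) by lra. apply sqrt_le_1_alt. exact L.
Qed.

Lemma sq_round a t : - (1/2) <= t <= 1/2 -> (a * t)^2 <= a^2/4.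
Proof. intros H. assert (t^2 <= 1/4) by nra. replace ((a*t)^2) with (a^2 * t^2) by ring.
  assert (0 <= a^2) by nra. nra. Qed.

Lemma KG a b h D : 0 < h -> h <= a -> h <= b -> h^2 <= D -> 4 * D <= a^2 + b^2 ->
  3 * h^2 * (4 * h^2 + D) <= 5 * (a*b)^2 /\ (h^2 < D -> 3 * h^2 * (4 * h^2 + D) < 5 * (a*b)^2).
Proof.
  intros Hh Ha Hb HD H4.
  assert (E : 5 * (a*b)^2 - 3 * h^2 * (4 * h^2 + D) >=
     5 * (a^2 - h^2) * (b^2 - h^2) + 17/4 * h^2 * (4*D - 4*h^2)) by nra.
  assert (0 <= (a^2 - h^2) * (b^2 - h^2)) by (apply Rmult_le_pos; nra).
  split; [nra|]. intro. assert (0 < h^2) by nra. nra.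
Qed.

Lemma KL a h c e R S D : 0 < h -> h <= 2 * a -> a < h -> 0 <= c -> c^2 = h^2 - a^2 ->
  0 <= e -> e <= a -> 0 <= R -> R + c <= S -> D <= e^2 + R^2 -> D <= (a-e)^2 + S^2 ->
  h^2 <= D -> h^2 * (D + 2 * h^2) <= 4 * a^2 * S^2.
Proof.
  intros Hh H2a Hah Hc Hc2 He0 Hea HR HS HD1 HD2 HD.
  assert (Ha : 0 < a) by lra.
  destruct (Rle_or_lt (4 * a^2 * D) (h^2 * (D + 2 * h^2))) as [Hc1|Hc1].
  -
    assert (Hsc : (S - c)^2 >= D - a^2) by nra.
    assert (Hsc2 : S - c >= c) by nra.
    assert (HS2 : S^2 >= D + 3 * h^2 - 4 * a^2) by nra.
    assert (H43 : 4 * a^2 <= 3 * h^2) by nra.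
    assert (4 * a^2 * S^2 >= 4 * a^2 * (D + 3 * h^2 - 4 * a^2)) by nra.
    assert (0 <= (4*a^2 - h^2) * (D - h^2)) by (apply Rmult_le_pos; nra).
    assert (0 <= (4*a^2 - h^2) * (3*h^2 - 4*a^2)) by (apply Rmult_le_pos; nra).
    nra.
  - set (G := (4 * a^2 * D - h^2 * D - 2 * h^4) / (4 * a^2)).
    assert (HG0 : 0 <= G) by (unfold G; apply Rmult_le_pos; [nra| left; apply Rinv_0_lt_compat; nra]).
    set (g := sqrt G).
    assert (Hg0 : 0 <= g) by apply sqrt_pos.
    assert (Hg2 : 4 * a^2 * g^2 = 4 * a^2 * D - h^2 * D - 2 * h^4).
    { unfold g. rewrite pow2_sqrt by exact HG0. unfold G. field. lra. }
    destruct (Rle_or_lt (a - e) g) as [Hf|Hf].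
    + assert (S^2 >= D - g^2) by nra. nra.
    + assert (He2 : e^2 <= (a - g)^2) by nra.
      assert (Hsc : (S - c)^2 >= D - (a - g)^2) by nra.
      assert (Hag : (a-g)^2 <= a^2) by nra.
      assert (Hsc2 : S - c >= c) by nra.
      assert (HS2 : S^2 >= D - (a-g)^2 + 3 * c^2) by nra.
      assert (Hk : 2 * a * g >= 4 * a^2 - 3 * h^2).
      { destruct (Rle_or_lt (4 * a^2) (3 * h^2)); [nra|].
        assert (4 * a^2 * g^2 >= (4 * a^2 - 3 * h^2)^2) by nra.
        nra. }
      assert (4 * a^2 * S^2 >= 4 * a^2 * (D - (a-g)^2 + 3 * c^2)) by nra.
      nra.
Qed.

Lemma TA s A2 h d : 0 < h -> h <= d -> h^2 <= s -> 4 * s * d^2 <= s^2 + A2 -> 3 * s^2 <= 4 * A2 ->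
  3 * h^2 * (4 * h^2 + d^2) <= 5 * A2 /\ (h < d -> 3 * h^2 * (4 * h^2 + d^2) < 5 * A2).
Proof.
  intros Hh Hd Hs H1 H2.
  assert (Hd2 : h^2 <= d^2) by nra.
  destruct (Rle_or_lt s (4 * d^2 - h^2)) as [C|C].
  - assert (0 <= (s - h^2) * (4*d^2 - s - h^2)) by (apply Rmult_le_pos; nra).
    assert (A2 >= h^2 * (4 * d^2 - h^2)) by nra.
    split; [nra|]. intro. assert (h^2 < d^2) by nra. assert (0 < h^2) by nra. nra.
  - assert (3 * d^2 <= 4 * d^2 - h^2) by nra.
    assert (A2 >= 3/4 * (3 * d^2)^2) by nra.
    assert (3 * h^2 * (4 * h^2 + d^2) <= 15 * d^2 * d^2) by nra.
    assert (0 < d^2 * d^2) by (assert (0 < d^2) by nra; nra).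
    split; intros; nra.
Qed.

Lemma klein_bound a b h d p1 p2 : two_disk_config (FlatKlein a b) h p1 p2 ->
  is_flat_dist (FlatKlein a b) p1 p2 d ->
  3 * h^2 * (4 * h^2 + d^2) <= 5 * (a*b)^2 /\ (h < d -> 3 * h^2 * (4 * h^2 + d^2) < 5 * (a*b)^2).
Proof.
  intros Hc Hf. pose proof (flat_dist_ge _ _ _ _ _ Hc Hf) as Hhd.
  destruct (flat_dist_sq _ _ _ _ Hf) as [Hd0 Hdsq].
  destruct Hc as ([Ha Hb] & Hh & He1 & He2 & Hdj).
  assert (Hr : 0 < h/2) by lra.
  assert (H4 : 4 * (h/2)^2 = h^2) by field.
  assert (H2a : h^2 <= (2*a)^2).
  { rewrite <- H4. replace ((2*a)^2) with ((2*a)^2 + 0^2) by ring.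
    apply (emb_trans _ p1 _ 2%Z 0%Z (2*a) 0 Hr He1).
    - intros [x y]. simpl. f_equal; ring.
    - nra. }
  assert (Hbh : h^2 <= b^2).
  { rewrite <- H4. replace (b^2) with (0^2 + b^2) by ring.
    apply (emb_trans _ p1 _ 0%Z 1%Z 0 b Hr He1).
    - intros [x y]. simpl. f_equal; ring.
    - nra. }
  assert (Hha : h <= 2 * a) by nra.
  assert (Hhb : h <= b) by nra.
  destruct p1 as [x1 y1]. destruct p2 as [x2 y2].
  set (D := d^2).
  assert (HhD : h^2 <= D) by (unfold D; nra).
  destruct (Rle_or_lt h a) as [Hah|Hah].
  - destruct (round_Z ((x1 - x2)/a)) as [m Hm].
    set (Y := if Z.even m then y2 else - y2).
    destruct (round_Z ((y1 - Y)/b)) as [n Hn].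
    assert (Hsq : D <= (x1 - x2 - IZR m * a)^2 + (y1 - (Y + IZR n * b))^2).
    { pose proof (Hdsq m n) as X. unfold sq2 in X. cbn [deck fst snd] in X. fold Y in X.
      replace (x1 - x2 - IZR m * a) with (x1 - (x2 + IZR m * a)) by ring. exact X. }
    assert (Hx : (x1 - x2 - IZR m * a)^2 <= a^2/4).
    { replace (x1 - x2 - IZR m * a) with (a * ((x1 - x2)/a - IZR m)) by (field; lra).
      apply sq_round; lra. }
    assert (Hy : (y1 - (Y + IZR n * b))^2 <= b^2/4).
    { replace (y1 - (Y + IZR n * b)) with (b * ((y1 - Y)/b - IZR n)) by (field; lra).
      apply sq_round; lra. }
    destruct (KG a b h D) as [K1 K2]; auto; try lra.
    split; auto. intro. apply K2. unfold D; nra.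
  -
    destruct (floor_Z ((x1 - x2)/a)) as [m0 Hm0].
    set (e := x1 - x2 - IZR m0 * a).
    assert (He0 : 0 <= e).
    { unfold e. replace (x1 - x2 - IZR m0 * a) with (a * ((x1 - x2)/a - IZR m0)) by (field; lra). nra. }
    assert (Hea : e <= a).
    { unfold e. replace (x1 - x2 - IZR m0 * a) with (a * ((x1 - x2)/a - IZR m0)) by (field; lra). nra. }
    set (Y0 := if Z.even m0 then y2 else - y2).
    assert (HY1 : (if Z.even (m0 + 1) then y2 else - y2) = - Y0).
    { unfold Y0. rewrite Z.even_add. simpl. destruct (Z.even m0); simpl; ring. }
    destruct (round_Z ((y1 - Y0)/b)) as [n0 Hn0].
    destruct (round_Z ((y1 + Y0)/b)) as [n1 Hn1].
    set (w0 := y1 - Y0 - IZR n0 * b).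
    set (w1 := y1 + Y0 - IZR n1 * b).
    assert (Hw0 : w0^2 <= b^2/4).
    { unfold w0. replace (y1 - Y0 - IZR n0 * b) with (b * ((y1 - Y0)/b - IZR n0)) by (field; lra).
      apply sq_round; lra. }
    assert (Hw1 : w1^2 <= b^2/4).
    { unfold w1. replace (y1 + Y0 - IZR n1 * b) with (b * ((y1 + Y0)/b - IZR n1)) by (field; lra).
      apply sq_round; lra. }
    assert (HD0 : D <= e^2 + w0^2).
    { pose proof (Hdsq m0 n0) as X. unfold sq2 in X. cbn [deck fst snd] in X. fold Y0 in X.
      unfold e, w0. replace (y1 - Y0 - IZR n0 * b) with (y1 - (Y0 + IZR n0 * b)) by ring.
      replace (x1 - x2 - IZR m0 * a) with (x1 - (x2 + IZR m0 * a)) by ring. exact X. }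
    assert (HD1 : D <= (a - e)^2 + w1^2).
    { pose proof (Hdsq (m0+1)%Z n1) as X. unfold sq2 in X. cbn [deck fst snd] in X. rewrite HY1 in X.
      rewrite plus_IZR in X.
      replace ((a - e)^2) with ((x1 - (x2 + (IZR m0 + 1) * a))^2) by (unfold e; ring).
      replace (w1^2) with ((y1 - (- Y0 + IZR n1 * b))^2) by (unfold w1; ring). exact X. }
    assert (Hg1 : h^2 <= a^2 + (w0 + w1)^2).
    { rewrite <- H4. pose proof (emb_glide a b (x1,y1) (h/2) (n0 + n1) Ha Hr He1) as X.
      cbn [fst snd] in X. rewrite plus_IZR in X.
      replace (w0 + w1) with (2 * y1 - (IZR n0 + IZR n1) * b) by (unfold w0, w1; ring). exact X. }
    assert (Hg2 : h^2 <= a^2 + (w1 - w0)^2).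
    { rewrite <- H4. unfold w0, w1, Y0 in *. destruct (Z.even m0).
      - pose proof (emb_glide a b (x2,y2) (h/2) (n1 - n0) Ha Hr He2) as X.
        cbn [fst snd] in X. rewrite minus_IZR in X.
        replace (y1 + y2 - IZR n1 * b - (y1 - y2 - IZR n0 * b)) with (2 * y2 - (IZR n1 - IZR n0) * b) by ring.
        exact X.
      - pose proof (emb_glide a b (x2,y2) (h/2) (n0 - n1) Ha Hr He2) as X.
        cbn [fst snd] in X. rewrite minus_IZR in X.
        replace ((y1 + - y2 - IZR n1 * b - (y1 - - y2 - IZR n0 * b))^2) with ((2 * y2 - (IZR n0 - IZR n1) * b)^2) by ring.
        exact X. }
    set (c := sqrt (h^2 - a^2)).
    assert (Hc0 : 0 <= c) by apply sqrt_pos.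
    assert (Hc2 : c^2 = h^2 - a^2) by (unfold c; rewrite pow2_sqrt; nra).
    set (R := Rabs w0). set (S := Rabs w1).
    assert (HR0 : 0 <= R) by apply Rabs_pos.
    assert (HS0 : 0 <= S) by apply Rabs_pos.
    assert (HR2 : R^2 = w0^2) by (unfold R; rewrite <- Rsqr_pow2, <- Rsqr_abs, Rsqr_pow2; reflexivity).
    assert (HS2 : S^2 = w1^2) by (unfold S; rewrite <- Rsqr_pow2, <- Rsqr_abs, Rsqr_pow2; reflexivity).
    assert (HRS : c^2 <= (R - S)^2).
    { unfold R, S. destruct (Rle_or_lt 0 w0); destruct (Rle_or_lt 0 w1);
        [rewrite (Rabs_right w0), (Rabs_right w1) by lra
        |rewrite (Rabs_right w0), (Rabs_left w1) by lra
        |rewrite (Rabs_left w0), (Rabs_right w1) by lra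
        |rewrite (Rabs_left w0), (Rabs_left w1) by lra]; nra. }
    assert (Hcase : R + c <= S \/ S + c <= R).
    { destruct (Rle_or_lt R S); [left|right]; nra. }
    assert (Hmain : h^2 * (D + 2 * h^2) <= 4 * a^2 * (b/2)^2).
    { destruct Hcase as [Hc'|Hc'].
      - pose proof (KL a h c e R S D Hh Hha Hah Hc0 Hc2 He0 Hea HR0 Hc' ltac:(lra) ltac:(lra) HhD).
        assert (S^2 <= (b/2)^2) by nra. nra.
      - pose proof (KL a h c (a - e) S R D Hh Hha Hah Hc0 Hc2 ltac:(lra) ltac:(lra) HS0 Hc'
           ltac:(lra) ltac:(replace (a - (a-e)) with e by ring; lra) HhD).
        assert (R^2 <= (b/2)^2) by nra. nra. }
    replace (4 * a^2 * (b/2)^2) with ((a*b)^2) in Hmain by field.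
    assert (0 < h^2) by nra.
    split; [nra|]. intro Hlt. assert (h^2 < D) by (unfold D; nra). nra.
Qed.

Lemma min_list {T} (f : T -> R) (l : list T) : l <> nil ->
  exists x, In x l /\ forall y, In y l -> f x <= f y.
Proof.
  induction l as [|a l IH]; [congruence|]. intros _.
  destruct l as [|b l'].
  - exists a. split; [left; auto|]. intros y [<-|[]]. lra.
  - destruct IH as [x [Hx Hm]]; [discriminate|].
    destruct (Rle_or_lt (f a) (f x)).
    + exists a. split; [left; auto|]. intros y [<-|Hy]; [lra|]. specialize (Hm y Hy). lra.
    + exists x. split; [right; auto|]. intros y [<-|Hy]; [lra|]. auto.
Qed.

Definition zr (B : Z) : list Z := map (fun i => (Z.of_nat i - B)%Z) (seq 0 (Z.to_nat (2*B+1))).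

Lemma in_zr B m : (- B <= m <= B)%Z -> In m (zr B).
Proof.
  intros H. unfold zr. apply in_map_iff. exists (Z.to_nat (m + B)). split.
  - rewrite Z2Nat.id by lia. lia.
  - apply in_seq. lia.
Qed.

Definition nzb (p : Z * Z) : bool := negb (Z.eqb (fst p) 0 && Z.eqb (snd p) 0).

Lemma shortest (Q : Z -> Z -> R) (B : Z) : (1 <= B)%Z ->
  (forall m n, Q m n <= Q 1%Z 0%Z -> (-B <= m <= B /\ -B <= n <= B)%Z) ->
  exists m0 n0, ~ (m0 = 0%Z /\ n0 = 0%Z) /\
    forall m n, ~ (m = 0%Z /\ n = 0%Z) -> Q m0 n0 <= Q m n.
Proof.
  intros HB Hbox.
  set (l := filter nzb (list_prod (zr B) (zr B))).
  assert (Hin : forall m n, ~ (m = 0%Z /\ n = 0%Z) -> (-B <= m <= B /\ -B <= n <= B)%Z -> In (m,n) l).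
  { intros m n Hnz [H1 H2]. unfold l. apply filter_In. split.
    - apply in_prod; apply in_zr; auto.
    - unfold nzb; simpl. destruct (Z.eqb_spec m 0); destruct (Z.eqb_spec n 0); simpl; auto; tauto. }
  destruct (min_list (fun p => Q (fst p) (snd p)) l) as [[m0 n0] [Hx Hm]].
  { intro E. assert (In (1%Z,0%Z) l) by (apply Hin; lia). rewrite E in H. contradiction. }
  exists m0, n0. split.
  - unfold l in Hx. apply filter_In in Hx. destruct Hx as [_ Hz]. unfold nzb in Hz; simpl in Hz.
    intros [-> ->]. simpl in Hz. discriminate.
  - assert (H10 : Q m0 n0 <= Q 1%Z 0%Z) by (apply (Hm (1%Z,0%Z)); apply Hin; lia).
    intros m n Hnz. destruct (Rle_or_lt (Q m n) (Q 1%Z 0%Z)) as [Hle|Hlt].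
    + apply (Hm (m,n)). apply Hin; auto.
    + lra.
Qed.

Lemma round_along l1 l2 z1 z2 : 0 < l1^2 + l2^2 ->
  exists j : Z, ((z1 - IZR j * l1) * l1 + (z2 - IZR j * l2) * l2)^2 <= (l1^2 + l2^2)^2 / 4.
Proof.
  intros H. destruct (round_Z ((z1 * l1 + z2 * l2) / (l1^2 + l2^2))) as [j Hj].
  exists j.
  replace ((z1 - IZR j * l1) * l1 + (z2 - IZR j * l2) * l2) with
    ((l1^2 + l2^2) * ((z1 * l1 + z2 * l2) / (l1^2 + l2^2) - IZR j)) by (field; lra).
  apply sq_round; lra.
Qed.

Lemma round_cross C Dt : Dt <> 0 -> exists k : Z, (C - IZR k * Dt)^2 <= Dt^2 / 4.
Proof.
  intros H. destruct (round_Z (C / Dt)) as [k Hk]. exists k.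
  replace (C - IZR k * Dt) with (Dt * (C / Dt - IZR k)) by (field; lra).
  apply sq_round; lra.
Qed.

Lemma lagrange x1 x2 y1 y2 : (x1^2 + x2^2) * (y1^2 + y2^2) = (x1*y1 + x2*y2)^2 + (x1*y2 - x2*y1)^2.
Proof. ring. Qed.

Lemma IZR_nz m : IZR m <> 0 -> m <> 0%Z.
Proof. intros H E. subst. apply H. reflexivity. Qed.

Lemma torus_bound u1 u2 v1 v2 h d p1 p2 :
  two_disk_config (FlatTorus u1 u2 v1 v2) h p1 p2 ->
  is_flat_dist (FlatTorus u1 u2 v1 v2) p1 p2 d ->
  3 * h^2 * (4 * h^2 + d^2) <= 5 * (Rabs (u1 * v2 - u2 * v1))^2 /\
  (h < d -> 3 * h^2 * (4 * h^2 + d^2) < 5 * (Rabs (u1 * v2 - u2 * v1))^2).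
Proof.
  intros Hc Hf. pose proof (flat_dist_ge _ _ _ _ _ Hc Hf) as Hhd.
  destruct (flat_dist_sq _ _ _ _ Hf) as [Hd0 Hdsq].
  destruct Hc as (HDt & Hh & He1 & He2 & Hdj). simpl in HDt.
  set (Dt := u1 * v2 - u2 * v1) in *.
  rewrite pow2_abs.
  assert (Hr : 0 < h/2) by lra.
  assert (H4 : 4 * (h/2)^2 = h^2) by field.
  set (Lx := fun m n => IZR m * u1 + IZR n * v1).
  set (Ly := fun m n => IZR m * u2 + IZR n * v2).
  set (Q := fun m n => Lx m n ^ 2 + Ly m n ^ 2).
  assert (Hdeck : forall m n x, deck (FlatTorus u1 u2 v1 v2) m n x = (fst x + Lx m n, snd x + Ly m n)).
  { intros m n x. simpl. unfold Lx, Ly. f_equal; ring. }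
  assert (HcrossV : forall m n, Lx m n * v2 - Ly m n * v1 = IZR m * Dt) by (intros; unfold Lx, Ly, Dt; ring).
  assert (HcrossU : forall m n, u1 * Ly m n - u2 * Lx m n = IZR n * Dt) by (intros; unfold Lx, Ly, Dt; ring).
  assert (HQpos : forall m n, ~ (m = 0%Z /\ n = 0%Z) -> 0 < Q m n).
  { intros m n Hnz. unfold Q. destruct (Rlt_or_le 0 (Lx m n ^ 2 + Ly m n ^ 2)) as [|Hle]; auto.
    exfalso. assert (Lx m n = 0) by nra. assert (Ly m n = 0) by nra.
    pose proof (HcrossV m n) as X1. pose proof (HcrossU m n) as X2.
    rewrite H, H0 in X1, X2.
    assert (IZR m = 0). { apply (Rmult_eq_reg_r Dt); auto. lra. }
    assert (IZR n = 0). { apply (Rmult_eq_reg_r Dt); auto. lra. }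
    apply Hnz. split; apply eq_IZR; auto. }
  assert (Hemb : forall m n, ~ (m = 0%Z /\ n = 0%Z) -> h^2 <= Q m n).
  { intros m n Hnz. rewrite <- H4. apply (emb_trans _ p1 _ m n (Lx m n) (Ly m n) Hr He1).
    - intros x. apply Hdeck.
    - apply HQpos; auto. }
  destruct p1 as [x1 y1]. destruct p2 as [x2 y2].
  set (z1 := x1 - x2). set (z2 := y1 - y2).
  assert (Hcov : forall m n, d^2 <= (z1 - Lx m n)^2 + (z2 - Ly m n)^2).
  { intros m n. pose proof (Hdsq m n) as X. rewrite Hdeck in X. unfold sq2 in X. cbn [fst snd] in X.
    unfold z1, z2. replace (x1 - x2 - Lx m n) with (x1 - (x2 + Lx m n)) by ring.
    replace (y1 - y2 - Ly m n) with (y1 - (y2 + Ly m n)) by ring. exact X. }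
  set (U := u1^2 + u2^2). set (V := v1^2 + v2^2).
  assert (HQ10 : Q 1%Z 0%Z = U) by (unfold Q, Lx, Ly, U; simpl; ring).
  assert (HDt2 : 0 < Dt^2) by (destruct (Rlt_or_le 0 Dt); [nra|]; assert (Dt < 0) by lra; nra).
  set (X := (U * V + U * U) / Dt^2).
  assert (HX0 : 0 <= X).
  { unfold X. apply Rmult_le_pos; [unfold U, V; nra| left; apply Rinv_0_lt_compat; auto]. }
  destruct (archimed X) as [HB1 HB2].
  set (B := up X) in *.
  assert (HB : (1 <= B)%Z).
  { assert (0 < IZR B) by lra. apply lt_IZR in H. lia. }
  destruct (shortest Q B HB) as [m0 [n0 [Hnz0 Hmin]]].
  { intros m n Hle. rewrite HQ10 in Hle.
    assert (Hm : IZR m ^2 * Dt^2 <= U * V).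
    { rewrite <- Rpow_mult_distr, <- (HcrossV m n).
      assert (Hl : (Lx m n * v2 - Ly m n * v1)^2 <= Q m n * V).
      { unfold Q, V. cbv beta. rewrite (Rplus_comm (v1^2)).
        replace (v1^2) with ((-v1)^2) by ring. rewrite lagrange.
        replace (Lx m n * v2 - Ly m n * - v1) with (Lx m n * v2 + Ly m n * v1) by ring.
        replace (Lx m n * - v1 - Ly m n * v2) with (- (Lx m n * v1 + Ly m n * v2)) by ring.
        pose proof (pow2_ge_0 (Lx m n * v1 + Ly m n * v2)). nra. }
      assert (0 <= V) by (unfold V; nra).
      assert (Q m n * V <= U * V) by (apply Rmult_le_compat_r; auto).
      lra. }
    assert (Hn : IZR n ^2 * Dt^2 <= U * U).
    { rewrite <- Rpow_mult_distr, <- (HcrossU m n).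
      assert (Hl : (u1 * Ly m n - u2 * Lx m n)^2 <= U * Q m n).
      { unfold Q, U. cbv beta. rewrite lagrange.
        pose proof (pow2_ge_0 (u1 * Lx m n + u2 * Ly m n)). lra. }
      assert (0 <= U) by (unfold U; nra).
      assert (U * Q m n <= U * U) by (apply Rmult_le_compat_l; auto).
      lra. }
    assert (HmX : IZR m ^ 2 <= X).
    { unfold X. apply (Rmult_le_reg_r (Dt^2)); auto. unfold Rdiv. rewrite Rmult_assoc, Rinv_l by lra.
      assert (0 <= U * U) by (unfold U; nra). nra. }
    assert (HnX : IZR n ^ 2 <= X).
    { unfold X. apply (Rmult_le_reg_r (Dt^2)); auto. unfold Rdiv. rewrite Rmult_assoc, Rinv_l by lra.
      assert (0 <= U * V) by (unfold U, V; nra). nra. }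
    assert (Hm2 : (m * m < B)%Z) by (apply lt_IZR; rewrite mult_IZR; simpl in HmX; lra).
    assert (Hn2 : (n * n < B)%Z) by (apply lt_IZR; rewrite mult_IZR; simpl in HnX; lra).
    split; nia. }
  set (a2 := Q m0 n0).
  assert (Ha2h : h^2 <= a2) by (apply Hemb; auto).
  assert (Ha2 : 0 < a2) by (apply HQpos; auto).
  assert (Hg : Z.gcd m0 n0 = 1%Z).
  { set (g := Z.gcd m0 n0).
    assert (Hg0 : (0 <= g)%Z) by apply Z.gcd_nonneg.
    assert (Hgnz : g <> 0%Z) by (intro E; apply Hnz0; apply Z.gcd_eq_0; exact E).
    destruct (Z.eq_dec g 1) as [|Hne]; auto. exfalso.
    destruct (Z.gcd_divide_l m0 n0) as [k Hk]. destruct (Z.gcd_divide_r m0 n0) as [k' Hk'].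
    fold g in Hk, Hk'.
    assert (Hkk : ~ (k = 0%Z /\ k' = 0%Z)) by (intros [-> ->]; apply Hnz0; lia).
    assert (HQk := HQpos k k' Hkk).
    assert (Hmk := Hmin k k' Hkk).
    assert (Hge : (2 <= g)%Z) by lia.
    apply IZR_le in Hge.
    assert (E : a2 = IZR g ^ 2 * Q k k').
    { unfold a2, Q, Lx, Ly. rewrite Hk, Hk', !mult_IZR. ring. }
    fold a2 in Hmk. assert (Hg4 : 4 <= IZR g ^ 2) by nra.
    assert (4 * Q k k' <= IZR g ^ 2 * Q k k') by (apply Rmult_le_compat_r; lra).
    lra. }
  destruct (Z.gcd_bezout m0 n0 1 Hg) as [p [q Hpq]].
  set (m2 := (- q)%Z). set (n2 := p).
  assert (Hdet : IZR m0 * IZR n2 - IZR n0 * IZR m2 = 1).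
  { rewrite <- !mult_IZR, <- minus_IZR. unfold m2, n2. replace (m0 * p - n0 * - q)%Z with (p * m0 + q * n0)%Z by ring.
    rewrite Hpq. reflexivity. }
  set (l1 := Lx m0 n0). set (l2 := Ly m0 n0).
  set (k1 := Lx m2 n2). set (k2 := Ly m2 n2).
  assert (Hcr : l1 * k2 - l2 * k1 = Dt).
  { unfold l1, l2, k1, k2, Lx, Ly. transitivity ((IZR m0 * IZR n2 - IZR n0 * IZR m2) * Dt).
    - unfold Dt; ring.
    - rewrite Hdet; ring. }
  assert (Ha2e : a2 = l1^2 + l2^2) by reflexivity.
  destruct (round_along l1 l2 k1 k2 ltac:(lra)) as [j Hj].
  assert (Hpack : 3 * a2^2 <= 4 * Dt^2).
  { set (mm := (m2 - j * m0)%Z). set (nn := (n2 - j * n0)%Z).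
    assert (Hnzw : ~ (mm = 0%Z /\ nn = 0%Z)).
    { intros [E1 E2]. unfold mm, nn in *.
      assert (IZR m2 = IZR j * IZR m0) by (rewrite <- mult_IZR; f_equal; lia).
      assert (IZR n2 = IZR j * IZR n0) by (rewrite <- mult_IZR; f_equal; lia).
      rewrite H, H0 in Hdet. lra. }
    assert (Hw : Lx mm nn = k1 - IZR j * l1 /\ Ly mm nn = k2 - IZR j * l2).
    { unfold mm, nn, k1, k2, l1, l2, Lx, Ly. rewrite !minus_IZR, !mult_IZR. split; ring. }
    destruct Hw as [Hw1 Hw2].
    assert (Hq := Hmin mm nn Hnzw). fold a2 in Hq. unfold Q in Hq. cbv beta in Hq. rewrite Hw1, Hw2 in Hq.
    pose proof (lagrange (k1 - IZR j * l1) (k2 - IZR j * l2) l1 l2) as Lg.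
    replace ((k1 - IZR j * l1) * l2 - (k2 - IZR j * l2) * l1) with (- Dt) in Lg by (rewrite <- Hcr; ring).
    rewrite <- Ha2e in Lg.
    assert (a2 * a2 <= a2 * ((k1 - IZR j * l1) ^ 2 + (k2 - IZR j * l2) ^ 2)) by (apply Rmult_le_compat_l; lra).
    nra. }
  destruct (round_cross (l1 * z2 - l2 * z1) Dt HDt) as [k Hk].
  set (y1' := z1 - IZR k * k1). set (y2' := z2 - IZR k * k2).
  destruct (round_along l1 l2 y1' y2' ltac:(lra)) as [j' Hj'].
  assert (Hcov2 : 4 * a2 * d^2 <= a2^2 + Dt^2).
  { set (mm := (k * m2 + j' * m0)%Z). set (nn := (k * n2 + j' * n0)%Z).
    assert (Hw : Lx mm nn = IZR k * k1 + IZR j' * l1 /\ Ly mm nn = IZR k * k2 + IZR j' * l2).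
    { unfold mm, nn, k1, k2, l1, l2, Lx, Ly. rewrite !plus_IZR, !mult_IZR. split; ring. }
    destruct Hw as [Hw1 Hw2].
    pose proof (Hcov mm nn) as Hc. rewrite Hw1, Hw2 in Hc.
    replace (z1 - (IZR k * k1 + IZR j' * l1)) with (y1' - IZR j' * l1) in Hc by (unfold y1'; ring).
    replace (z2 - (IZR k * k2 + IZR j' * l2)) with (y2' - IZR j' * l2) in Hc by (unfold y2'; ring).
    pose proof (lagrange (y1' - IZR j' * l1) (y2' - IZR j' * l2) l1 l2) as Lg.
    replace ((y1' - IZR j' * l1) * l2 - (y2' - IZR j' * l2) * l1) with (- (l1 * z2 - l2 * z1 - IZR k * Dt)) in Lg
      by (rewrite <- Hcr; unfold y1', y2'; ring).
    rewrite <- Ha2e in Lg.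
    assert (a2 * d^2 <= a2 * ((y1' - IZR j' * l1) ^ 2 + (y2' - IZR j' * l2) ^ 2)) by (apply Rmult_le_compat_l; lra).
    nra. }
  apply (TA a2 (Dt^2) h d Hh Hhd Ha2h); nra.
Qed.

Lemma edist_lt_sq p q r : edist p q < r -> sq2 p q < r ^ 2.
Proof. intros H. rewrite <- edist_sq. pose proof (edist_nonneg p q). nra. Qed.

Lemma int_sq_lt1 m : IZR m ^ 2 < 1 -> m = 0%Z.
Proof.
  intros H. destruct (Z.eq_dec m 0) as [|Hm]; auto. exfalso.
  destruct (Z_lt_le_dec m 0) as [Hl|Hl].
  - assert (IZR m <= -1) by (apply IZR_le; lia). nra.
  - assert (1 <= IZR m) by (apply IZR_le; lia). nra.
Qed.

Lemma int_half m : 1/4 <= (1/2 - IZR m) ^ 2.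
Proof.
  destruct (Z_lt_le_dec m 1) as [Hl|Hl].
  - assert (IZR m <= 0) by (apply IZR_le; lia). nra.
  - assert (1 <= IZR m) by (apply IZR_le; lia). nra.
Qed.

Definition N0 := FlatTorus 1 0 0 (sqrt 3).
Definition q1 : pt := (0, 0).
Definition q2 : pt := (1/2, sqrt 3 / 2).

Lemma s3 : sqrt 3 ^ 2 = 3.
Proof. apply pow2_sqrt. lra. Qed.

Lemma deck0 m n x : deck N0 m n x = (fst x + IZR m, snd x + IZR n * sqrt 3).
Proof. unfold N0; simpl. f_equal; ring. Qed.

Lemma emb0 p : embedded_disk N0 p (1/2).
Proof.
  intros x y Hx Hy [m [n Hd]]. rewrite deck0 in Hd.
  apply edist_lt_sq in Hx. apply edist_lt_sq in Hy.
  destruct p as [p1 p2]. destruct x as [x1 x2]. destruct y as [y1 y2].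
  simpl in Hd. injection Hd as E1 E2. unfold sq2 in *; simpl in *.
  pose proof s3.
  assert (Hsum : IZR m ^ 2 + 3 * IZR n ^ 2 < 1).
  { assert (Ea : IZR m = y1 - x1) by lra. assert (Eb : IZR n * sqrt 3 = y2 - x2) by lra.
    assert (Ec : (IZR n * sqrt 3)^2 = 3 * IZR n ^ 2) by (rewrite Rpow_mult_distr, s3; ring).
    pose proof (pow2_ge_0 (2*p1 - x1 - y1)). pose proof (pow2_ge_0 (2*p2 - x2 - y2)).
    assert (Ed : (y1 - x1)^2 + (y2 - x2)^2 < 1) by nra.
    rewrite <- Ea, <- Eb, Ec in Ed. lra. }
  assert (IZR m ^ 2 < 1) by nra. assert (IZR n ^ 2 < 1) by nra.
  apply int_sq_lt1 in H0. apply int_sq_lt1 in H1. subst. simpl in *.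
  f_equal; lra.
Qed.

Lemma disj0 : disjoint_disks N0 q1 q2 (1/2).
Proof.
  intros x y Hx Hy [m [n Hd]]. rewrite deck0 in Hd.
  apply edist_lt_sq in Hx. apply edist_lt_sq in Hy.
  destruct x as [x1 x2]. destruct y as [y1 y2].
  simpl in Hd. injection Hd as E1 E2. unfold sq2, q1, q2 in *; simpl in *.
  pose proof s3. pose proof (int_half m) as Hm. pose proof (int_half n) as Hn.
  assert (Hv : (1/2 - IZR m) ^ 2 + 3 * (1/2 - IZR n) ^ 2 < 1).
  { assert (Ea : 1/2 - IZR m = (1/2 - y1) + (x1 - 0)) by lra.
    assert (Eb : (1/2 - IZR n) * sqrt 3 = (sqrt 3 / 2 - y2) + (x2 - 0)) by lra.
    assert (Ec : ((1/2 - IZR n) * sqrt 3)^2 = 3 * (1/2 - IZR n) ^ 2) by (rewrite Rpow_mult_distr, s3; ring).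
    pose proof (pow2_ge_0 ((1/2 - y1) - (x1 - 0))). pose proof (pow2_ge_0 ((sqrt 3 / 2 - y2) - (x2 - 0))).
    assert (Ed : ((1/2 - y1) + (x1 - 0))^2 + ((sqrt 3 / 2 - y2) + (x2 - 0))^2 < 1) by nra.
    rewrite <- Ea, <- Eb, Ec in Ed. lra. }
  nra.
Qed.

Lemma conf0 : two_disk_config N0 1 q1 q2.
Proof.
  unfold two_disk_config. split; [|split; [lra|split; [|split]]].
  - unfold N0; simpl. assert (0 < sqrt 3) by (apply sqrt_lt_R0; lra). nra.
  - replace (1/2) with (1/2) by reflexivity. apply emb0.
  - apply emb0.
  - apply disj0.
Qed.

Lemma dist0 : is_flat_dist N0 q1 q2 1.
Proof.
  split.
  - exists 0%Z, 0%Z. rewrite deck0. unfold edist, q1, q2; cbn [fst snd].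
    replace ((0 - (1 / 2 + IZR 0)) ^ 2 + (0 - (sqrt 3 / 2 + IZR 0 * sqrt 3)) ^ 2) with 1.
    + apply sqrt_1.
    + pose proof s3. simpl IZR. field_simplify. rewrite s3. field.
  - intros m n. rewrite deck0. unfold edist, q1, q2; cbn [fst snd].
    rewrite <- sqrt_1 at 1. apply sqrt_le_1_alt.
    pose proof s3. pose proof (int_half (- m)) as Hm. pose proof (int_half (- n)) as Hn.
    rewrite opp_IZR in Hm, Hn.
    assert ((sqrt 3 / 2 + IZR n * sqrt 3)^2 = 3 * (1/2 - - IZR n)^2).
    { replace (sqrt 3 / 2 + IZR n * sqrt 3) with ((1/2 - - IZR n) * sqrt 3) by field.
      rewrite Rpow_mult_distr, s3. ring. }
    replace ((0 - (1/2 + IZR m)) ^ 2) with ((1/2 - - IZR m)^2) by field.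
    replace ((0 - (sqrt 3 / 2 + IZR n * sqrt 3)) ^ 2) with ((sqrt 3 / 2 + IZR n * sqrt 3)^2) by field.
    nra.
Qed.

Lemma obj0 : objective N0 1 1 = sqrt 5 / sqrt 3.
Proof.
  unfold objective, area, N0. f_equal.
  - replace (4 * 1 ^ 2 + 1 ^ 2) with 5 by ring. ring.
  - rewrite Rabs_right. ring. assert (0 < sqrt 3) by (apply sqrt_lt_R0; lra). lra.
Qed.

Lemma general_bound N h d p1 p2 : two_disk_config N h p1 p2 -> is_flat_dist N p1 p2 d ->
  0 < area N /\ (h < d -> 3 * h^2 * (4 * h^2 + d^2) < 5 * (area N)^2).
Proof.
  intros Hc Hf. destruct N as [u1 u2 v1 v2|a b].
  - destruct (torus_bound _ _ _ _ _ _ _ _ Hc Hf) as [_ H]. split; auto.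
    destruct Hc as [Hv _]. simpl in *. apply Rabs_pos_lt. exact Hv.
  - destruct (klein_bound _ _ _ _ _ _ Hc Hf) as [_ H]. split; auto.
    destruct Hc as [[Ha Hb] _]. simpl. nra.
Qed.

Theorem lemma7 (N : flat_surface) (h d : R) (p1 p2 : pt) :
  two_disk_config N h p1 p2 ->
  is_flat_dist N p1 p2 d ->
  (forall (N' : flat_surface) (h' d' : R) (q1 q2 : pt),
      two_disk_config N' h' q1 q2 ->
      is_flat_dist N' q1 q2 d' ->
      objective N' h' d' <= objective N h d) ->
  d = h.
Proof.
  intros Hc Hf Hmax.
  pose proof (flat_dist_ge _ _ _ _ _ Hc Hf) as Hhd.
  destruct (Rle_or_lt d h) as [|Hlt]; [lra|]. exfalso.
  pose proof (Hmax N0 1 1 q1 q2 conf0 dist0) as Hopt. rewrite obj0 in Hopt.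
  destruct (general_bound _ _ _ _ _ Hc Hf) as [HA Hb]. specialize (Hb Hlt).
  destruct Hc as (_ & Hh & _).
  set (A := area N) in *.
  assert (H3 : 0 < sqrt 3) by (apply sqrt_lt_R0; lra).
  assert (H5 : 0 <= sqrt 5) by apply sqrt_pos.
  set (X := 4 * h ^ 2 + d ^ 2).
  assert (HX : 0 <= sqrt X) by apply sqrt_pos.
  assert (HX2 : sqrt X ^ 2 = X) by (apply pow2_sqrt; unfold X; nra).
  assert (H52 : sqrt 5 ^ 2 = 5) by (apply pow2_sqrt; lra).
  pose proof s3 as H32.
  assert (Hlt2 : (h * sqrt X * sqrt 3) ^ 2 < (sqrt 5 * A) ^ 2).
  { rewrite !Rpow_mult_distr, HX2, H52, H32. fold X in Hb. nra. }
  assert (Hlt3 : h * sqrt X * sqrt 3 < sqrt 5 * A).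
  { assert (0 <= h * sqrt X * sqrt 3) by (apply Rmult_le_pos; [apply Rmult_le_pos|]; lra).
    assert (0 <= sqrt 5 * A) by (apply Rmult_le_pos; lra). nra. }
  unfold objective in Hopt. fold A X in Hopt.
  assert (h * sqrt X / A < sqrt 5 / sqrt 3).
  { apply (Rmult_lt_reg_r (A * sqrt 3)). nra.
    replace (h * sqrt X / A * (A * sqrt 3)) with (h * sqrt X * sqrt 3) by (field; lra).
    replace (sqrt 5 / sqrt 3 * (A * sqrt 3)) with (sqrt 5 * A) by (field; lra). exact Hlt3. }
  lra.
Qed.
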